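(* Assume (A1) and fix all parameters $A,c,\gamma,\omega,h,d,\sigma,\mu,F^*$ and $b$. Let $\mathcal{B}=\{\beta>0:\ \text{conditions (C1)--(C4) hold with } E=\mu\sigma(1-2b^2\beta)\}$. Then $\mathcal{B}$ is either empty or an open interval $(\beta_a,\beta_b)$ with $0\le\beta_a<\beta_b\le 1/(2b^2)$; in particular $\mathcal{B}\ne(0,+\infty)$. Each of the three possibilities — $\mathcal{B}=\emptyset$ (''neutral'', unconditionally unstable), $\mathcal{B}=(0,\beta_b)$ (''destabilizing''), and $\mathcal{B}=(\beta_a,\beta_b)$ with $\beta_a>0$ (''mixed'') — occurs for suitable values of the fixed parameters satisfying (A1). The same statement holds with the roles of $\beta$ and $b$ exchanged: fixing $\beta$, the set $\{b>0: \text{(C1)--(C4) hold}\}$ is empty or an open interval $(b_a,b_b)$ with $0\le b_a<b_b\le 1/\sqrt{2\beta}$, and the three possibilities all occur.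
   Context: Parameters: $c\in(0,1)$, $\gamma>0$, $\omega\in[0,1]$, $h>0$, $d>0$, $\sigma>0$, $\mu>0$, $b>0$, $\beta>0$ (also $A>0,F^*>0$, which do not enter the conditions). Assumption (A1): $1-c-hd>0$. For a real number $E$, conditions (C1)--(C4) are: (C1) $E>0$ (equivalently, when $E=\mu\sigma(1-2b^2\beta)$, $2b^2\beta-1<0$); (C2) $(2-E)(1+c+2\gamma)-\omega^2dhE>0$; (C3) $1-c+cE+\omega^2dhE+\gamma c-E\gamma-E\gamma c+E^2\gamma-E^2\gamma^2+E\gamma^2-\gamma>0$; (C4) $2\gamma+c-cE-\gamma E-\omega^2dhE<3$. These are the conditions guaranteeing that all eigenvalues of the Jacobian matrix $\begin{pmatrix}c+\gamma&\omega h&-\gamma\\ \omega dE&1-E&0\\1&0&0\end{pmatrix}$ (the Jacobian, at the unbiased steady state $S^*$, of the model map) lie in the open unit disk. *)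

(* Defs.v *)
From Stdlib Require Import Reals.
Open Scope R_scope.

(* Standing parameter constraints together with assumption (A1).
   A and F^* do not enter any condition and are omitted. *)
Definition params_ok (c gamma omega h d sigma mu : R) : Prop :=
  0 < c < 1 /\ 0 < gamma /\ 0 <= omega <= 1 /\ 0 < h /\ 0 < d /\
  0 < sigma /\ 0 < mu /\ 1 - c - h * d > 0.

Definition C1 (E : R) : Prop := E > 0.
Definition C2 (c gamma omega h d E : R) : Prop :=
  (2 - E) * (1 + c + 2 * gamma) - omega ^ 2 * d * h * E > 0.
Definition C3 (c gamma omega h d E : R) : Prop :=
  1 - c + c * E + omega ^ 2 * d * h * E + gamma * c - E * gamma
  - E * gamma * c + E ^ 2 * gamma - E ^ 2 * gamma ^ 2 + E * gamma ^ 2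
  - gamma > 0.
Definition C4 (c gamma omega h d E : R) : Prop :=
  2 * gamma + c - c * E - gamma * E - omega ^ 2 * d * h * E < 3.

Definition conds (c gamma omega h d E : R) : Prop :=
  C1 E /\ C2 c gamma omega h d E /\ C3 c gamma omega h d E /\
  C4 c gamma omega h d E.

Definition Eval (sigma mu b beta : R) : R := mu * sigma * (1 - 2 * b ^ 2 * beta).

Definition Bset (c gamma omega h d sigma mu b : R) (beta : R) : Prop :=
  0 < beta /\ conds c gamma omega h d (Eval sigma mu b beta).

Definition bset (c gamma omega h d sigma mu beta : R) (b : R) : Prop :=
  0 < b /\ conds c gamma omega h d (Eval sigma mu b beta).

Definition is_empty (S : R -> Prop) : Prop := forall x, ~ S x.
Definition is_open_interval (S : R -> Prop) (lo hi : R) : Prop :=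
  forall x, S x <-> lo < x < hi.

(* Main.v *)
Require Import Defs.
From Stdlib Require Import Reals Lra Psatz Classical.
Open Scope R_scope.

Lemma quad_open (a b c0 x0 : R) : a*x0^2+b*x0+c0 > 0 ->
  exists e, e > 0 /\ forall x, x0 - e < x < x0 + e -> a*x^2+b*x+c0 > 0.
Proof.
  intros Hv. set (v := a*x0^2+b*x0+c0) in *.
  set (B := 2*a*x0+b).
  set (M := Rabs B + Rabs a + 1).
  assert (HM : M > 0) by (unfold M; pose proof (Rabs_pos B); pose proof (Rabs_pos a); lra).
  exists (Rmin 1 (v/(2*M))). split.
  { apply Rmin_pos; [lra|]. apply Rdiv_lt_0_compat; lra. }
  intros x Hx.
  pose proof (Rmin_l 1 (v/(2*M))). pose proof (Rmin_r 1 (v/(2*M))).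
  set (t := x - x0) in *.
  assert (Hu : Rabs t < Rmin 1 (v/(2*M))) by (apply Rabs_def1; unfold t; lra).
  set (u := Rabs t) in *.
  assert (HuM : u * M <= v/2).
  { assert (u * (2*M) <= v/(2*M)*(2*M)) by (apply Rmult_le_compat_r; lra).
    replace (v/(2*M)*(2*M)) with v in H1 by (field; lra). lra. }
  assert (h1 : Rabs (t*B) = u * Rabs B) by (unfold u; apply Rabs_mult).
  assert (h2 : - (t*B) <= Rabs (t*B)) by (rewrite <- Rabs_Ropp; apply Rle_abs).
  assert (h3 : Rabs (a*(t*t)) = Rabs a * (u*u)) by (unfold u; rewrite !Rabs_mult; ring).
  assert (h4 : - (a*(t*t)) <= Rabs (a*(t*t))) by (rewrite <- Rabs_Ropp; apply Rle_abs).
  assert (hu0 : 0 <= u) by apply Rabs_pos.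
  assert (e1 : a*x^2+b*x+c0 = v + t*B + a*(t*t)) by (unfold v, B, t; ring).
  rewrite e1.
  pose proof (Rabs_pos B). pose proof (Rabs_pos a).
  assert (u*u <= u) by nra.
  assert (Rabs a * (u*u) <= Rabs a * u) by nra.
  unfold M in HuM. nra.
Qed.

Lemma conds_open c g w h d E : conds c g w h d E ->
  exists e, e > 0 /\ forall E', E - e < E' < E + e -> conds c g w h d E'.
Proof.
  unfold conds, Defs.C1, C2, C3, C4. intros [H1 [H2 [H3 H4]]]. unfold Defs.C1 in *.
  set (k := w^2*d*h).
  destruct (quad_open 0 1 0 E) as [e1 [He1 P1]]. { lra. }
  destruct (quad_open 0 (-(1+c+2*g) - k) (2*(1+c+2*g)) E) as [e2 [He2 P2]].
  { unfold k. nra. }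
  destruct (quad_open (g-g*g) (c + k - g - g*c + g*g) (1-c+g*c-g) E) as [e3 [He3 P3]].
  { unfold k. nra. }
  destruct (quad_open 0 (c+g+k) (3-2*g-c) E) as [e4 [He4 P4]].
  { unfold k. nra. }
  exists (Rmin (Rmin e1 e2) (Rmin e3 e4)). split.
  { repeat apply Rmin_pos; auto. }
  intros E' HE'.
  pose proof (Rmin_l (Rmin e1 e2) (Rmin e3 e4)). pose proof (Rmin_r (Rmin e1 e2) (Rmin e3 e4)).
  pose proof (Rmin_l e1 e2). pose proof (Rmin_r e1 e2).
  pose proof (Rmin_l e3 e4). pose proof (Rmin_r e3 e4).
  specialize (P1 E' ltac:(lra)). specialize (P2 E' ltac:(lra)).
  specialize (P3 E' ltac:(lra)). specialize (P4 E' ltac:(lra)).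
  unfold k in *. unfold Defs.C1. repeat split; nra.
Qed.

Lemma C3_pos_small c g w h d E : 0 < c < 1 -> 0 < g < 1 -> 0 < E -> 0 <= w^2*d*h ->
  C3 c g w h d E.
Proof.
  intros Hc Hg HE Hk. unfold C3.
  assert (X : 1 - c - E*(g-c) + g*E^2 > 0).
  { destruct (Rle_dec g c).
    - assert (0 <= (c-g)*E) by (apply Rmult_le_pos; lra).
      assert (0 <= g*E^2) by (pose proof (pow2_ge_0 E); apply Rmult_le_pos; lra).
      lra.
    - destruct (Rle_dec (g*E) 1).
      + assert (E*(g-c) < E*(g*(1-c))) by (apply Rmult_lt_compat_l; nra).
        assert ((g*E)*(1-c) <= 1*(1-c)) by (apply Rmult_le_compat_r; lra).
        assert (0 <= g*E^2) by (pose proof (pow2_ge_0 E); apply Rmult_le_pos; lra).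
        lra.
      + assert (0 < E*(g*E - g + c)) by (apply Rmult_lt_0_compat; lra).
        lra. }
  assert (0 < (1-g)*(1 - c - E*(g-c) + g*E^2)) by (apply Rmult_lt_0_compat; lra).
  assert (0 <= w^2*d*h*E) by (apply Rmult_le_pos; lra).
  lra.
Qed.

Lemma conds_convex c g w h d sigma mu E1 E E2 :
  params_ok c g w h d sigma mu ->
  conds c g w h d E1 -> conds c g w h d E2 -> E1 <= E <= E2 -> conds c g w h d E.
Proof.
  unfold params_ok. intros (Hc & Hg & Hw & Hh & Hd & Hs & Hm & HA).
  unfold conds, Defs.C1, C2, C3, C4.
  intros [A1 [A2 [A3 A4]]] [B1 [B2 [B3 B4]]] HE.
  assert (Hk : 0 <= w^2*d*h) by (pose proof (pow2_ge_0 w); apply Rmult_le_pos; [apply Rmult_le_pos|]; lra).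
  set (k := w^2*d*h) in *.
  split; [lra|]. split.
  { assert (0 <= (E2-E)*(1+c+2*g+k)) by (apply Rmult_le_pos; lra). lra. }
  split; [|assert (0 <= (E-E1)*(c+g+k)) by (apply Rmult_le_pos; lra); lra].
  destruct (Rlt_dec g 1) as [Hg1|Hg1].
  - pose proof (C3_pos_small c g w h d E Hc (conj Hg Hg1) ltac:(lra) Hk) as P.
    unfold C3 in P. exact P.
  - set (q := fun x => (g-g*g)*x^2 + (c + k - g - g*c + g*g)*x + (1-c+g*c-g)).
    assert (Q: forall x, q x = 1 - c + c * x + k * x + g * c - x * g
      - x * g * c + x ^ 2 * g - x ^ 2 * g ^ 2 + x * g ^ 2 - g) by (intros; unfold q; ring).
    rewrite <- Q in A3, B3 |- *.
    destruct (Req_dec E1 E2) as [Heq|Hne].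
    + subst. replace E with E2 by lra. exact B3.
    + assert (id : (E2-E1) * q E = (E2-E)*q E1 + (E-E1)*q E2
          - (g-g*g)*(E-E1)*(E2-E)*(E2-E1)) by (unfold q; ring).
      assert ((E2-E1) * q E > 0).
      { rewrite id. assert ((g-g*g) <= 0) by nra.
        assert (0 <= (E-E1)*(E2-E)*(E2-E1)) by (apply Rmult_le_pos; [apply Rmult_le_pos|]; lra).
        destruct (Req_dec E E1). subst. nra. nra. }
      nra.
Qed.

Lemma interval_of (S : R -> Prop) lo hi :
  (forall x, S x -> lo < x < hi) ->
  (forall x y z, S x -> S z -> x <= y <= z -> S y) ->
  (forall x, S x -> exists e, e > 0 /\ forall y, x - e < y < x + e -> S y) ->
  is_empty S \/ exists a b, lo <= a /\ a < b /\ b <= hi /\ is_open_interval S a b.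
Proof.
  intros Hb Hc Ho.
  destruct (classic (exists x, S x)) as [[x0 Hx0]|Hn].
  2:{ left. intros x Hx. apply Hn. eauto. }
  right.
  destruct (completeness S) as [b [Hub Hlub]].
  { exists hi. intros x Hx. apply Hb in Hx. lra. }
  { eauto. }
  destruct (completeness (fun y => S (-y))) as [m [Hum Hlum]].
  { exists (-lo). intros y Hy. apply Hb in Hy. lra. }
  { exists (-x0). rewrite Ropp_involutive. auto. }
  assert (U1 : forall x, S x -> x <= b) by (intros; apply Hub; auto).
  assert (L1 : forall x, S x -> -m <= x).
  { intros x Hx. assert (-x <= m). apply Hum. rewrite Ropp_involutive. auto. lra. }
  assert (Shi : b <= hi).
  { apply Hlub. intros x Hx. apply Hb in Hx. lra. }
  assert (Slo : lo <= -m).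
  { assert (m <= -lo). apply Hlum. intros y Hy. apply Hb in Hy. lra. lra. }
  assert (Opn : forall x, S x -> -m < x < b).
  { intros x Hx. destruct (Ho x Hx) as [e [He P]].
    assert (S (x + e/2)) by (apply P; lra).
    assert (S (x - e/2)) by (apply P; lra).
    apply U1 in H. apply L1 in H0. lra. }
  exists (-m), b. split; [lra|]. split.
  { apply Opn in Hx0. lra. }
  split; [lra|].
  intros x. split; [apply Opn|].
  intros [Hl Hr].
  assert (E2 : exists s, S s /\ x <= s).
  { apply NNPP. intros Hn. assert (b <= x); [|lra].
    apply Hlub. intros y Hy. destruct (Rle_lt_dec y x); auto.
    exfalso. apply Hn. exists y. split; auto; lra. }
  assert (E1 : exists s, S s /\ s <= x).
  { apply NNPP. intros Hn. assert (m <= -x); [|lra].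
    apply Hlum. intros y Hy. destruct (Rle_lt_dec y (-x)); auto.
    exfalso. apply Hn. exists (-y). split; auto; lra. }
  destruct E1 as [s1 [S1 H1]]. destruct E2 as [s2 [S2 H2]].
  apply (Hc s1 x s2); auto.
Qed.

Lemma part_beta c g w h d s m b :
  params_ok c g w h d s m -> 0 < b ->
  (is_empty (Bset c g w h d s m b) \/
      exists ba bb : R, 0 <= ba /\ ba < bb /\ bb <= 1 / (2 * b ^ 2) /\
        is_open_interval (Bset c g w h d s m b) ba bb) /\
     ~ (forall beta, Bset c g w h d s m b beta <-> 0 < beta).
Proof.
  intros Hp Hb.
  pose proof Hp as (Hc & Hg & Hw & Hh & Hd & Hs & Hm & HA).
  assert (Hb2 : 0 < 2*b^2) by (assert (0 < b^2) by (apply pow_lt; lra); lra).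
  assert (Hms : 0 < m*s) by nra.
  set (K := m*s*(2*b^2)).
  assert (HK : 0 < K) by (apply Rmult_lt_0_compat; lra).
  assert (EvE : forall x, Eval s m b x = m*s - K*x) by (intros; unfold Eval, K; ring).
  split.
  - apply interval_of.
    + intros x [Hx Hcx]. destruct Hcx as [C _]. unfold Defs.C1 in C. rewrite EvE in C.
      split; auto.
      assert (x * (2*b^2) < 1 / (2*b^2) * (2*b^2)); [|apply Rmult_lt_reg_r in H; lra].
      replace (1 / (2*b^2) * (2*b^2)) with 1 by (field; lra).
      unfold K in C. nra.
    + intros x y z [Hx Cx] [Hz Cz] Hy. split; [lra|].
      apply (conds_convex c g w h d s m (Eval s m b z) (Eval s m b y) (Eval s m b x)); auto.
      rewrite !EvE. nra.
    + intros x [Hx Cx]. destruct (conds_open _ _ _ _ _ _ Cx) as [e [He P]].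
      exists (Rmin x (e/(K+1))). split.
      { apply Rmin_pos; auto. apply Rdiv_lt_0_compat; lra. }
      intros y Hy. pose proof (Rmin_l x (e/(K+1))). pose proof (Rmin_r x (e/(K+1))).
      set (r := Rmin x (e / (K + 1))) in *.
      assert (r*(K+1) <= e/(K+1)*(K+1)) by (apply Rmult_le_compat_r; lra).
      replace (e/(K+1)*(K+1)) with e in H1 by (field; lra).
      split; [lra|]. apply P. rewrite !EvE.
      assert (K*(y-x) < K*r) by (apply Rmult_lt_compat_l; lra).
      assert (K*(x-y) < K*r) by (apply Rmult_lt_compat_l; lra).
      nra.
  - intros H. destruct (H (1/(2*b^2))) as [_ H'].
    destruct (H' ltac:(apply Rdiv_lt_0_compat; lra)) as [_ [C _]].
    unfold Defs.C1 in C. rewrite EvE in C. unfold K in C.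
    replace (m * s - m * s * (2 * b ^ 2) * (1 / (2 * b ^ 2))) with 0 in C by (field; lra).
    lra.
Qed.

Lemma part_b c g w h d s m beta :
  params_ok c g w h d s m -> 0 < beta ->
  (is_empty (bset c g w h d s m beta) \/
      exists ba bb : R, 0 <= ba /\ ba < bb /\ bb <= 1 / sqrt (2 * beta) /\
        is_open_interval (bset c g w h d s m beta) ba bb) /\
     ~ (forall b, bset c g w h d s m beta b <-> 0 < b).
Proof.
  intros Hp Hbe.
  pose proof Hp as (Hc & Hg & Hw & Hh & Hd & Hs & Hm & HA).
  assert (Hms : 0 < m*s) by nra.
  set (K := m*s*(2*beta)).
  assert (HK : 0 < K) by (apply Rmult_lt_0_compat; lra).
  assert (EvE : forall x, Eval s m x beta = m*s - K*(x*x)) by (intros; unfold Eval, K; ring).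
  split.
  - apply interval_of.
    + intros x [Hx Hcx]. destruct Hcx as [C _]. unfold Defs.C1 in C. rewrite EvE in C.
      split; auto.
      assert (Hsq : 0 < sqrt (2*beta)) by (apply sqrt_lt_R0; lra).
      pose proof (sqrt_sqrt (2*beta) ltac:(lra)) as Hss.
      assert (x * sqrt (2*beta) < 1 / sqrt (2*beta) * sqrt (2*beta));
        [|apply Rmult_lt_reg_r in H; lra].
      replace (1 / sqrt (2*beta) * sqrt (2*beta)) with 1 by (field; lra).
      assert ((x*sqrt (2*beta))*(x*sqrt (2*beta)) < 1).
      { replace ((x*sqrt (2*beta))*(x*sqrt (2*beta))) with ((x*x)*(sqrt (2*beta)*sqrt (2*beta))) by ring.
        rewrite Hss. unfold K in C. nra. }
      assert (0 < x*sqrt (2*beta)) by (apply Rmult_lt_0_compat; lra).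
      nra.
    + intros x y z [Hx Cx] [Hz Cz] Hy. split; [lra|].
      apply (conds_convex c g w h d s m (Eval s m z beta) (Eval s m y beta) (Eval s m x beta)); auto.
      rewrite !EvE.
      assert (x*x <= y*y) by nra. assert (y*y <= z*z) by nra.
      nra.
    + intros x [Hx Cx]. destruct (conds_open _ _ _ _ _ _ Cx) as [e [He P]].
      set (L := K*(2*x+1)).
      assert (HL : 0 < L) by (unfold L; apply Rmult_lt_0_compat; lra).
      exists (Rmin (Rmin x 1) (e/(L+1))). split.
      { apply Rmin_pos; [apply Rmin_pos|]; auto; try lra. apply Rdiv_lt_0_compat; lra. }
      intros y Hy. pose proof (Rmin_l (Rmin x 1) (e/(L+1))). pose proof (Rmin_r (Rmin x 1) (e/(L+1))).
      pose proof (Rmin_l x 1). pose proof (Rmin_r x 1).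
      set (r := Rmin (Rmin x 1) (e / (L + 1))) in *.
      assert (r*(L+1) <= e/(L+1)*(L+1)) by (apply Rmult_le_compat_r; lra).
      replace (e/(L+1)*(L+1)) with e in H3 by (field; lra).
      split; [lra|]. apply P. rewrite !EvE.
      assert (id : K*(y*y) - K*(x*x) = K*((y-x)*(y+x))) by ring.
      assert (Hyx : 0 < y + x < 2*x+1) by lra.
      assert (Abs : Rabs ((y-x)*(y+x)) <= r*(2*x+1)).
      { rewrite Rabs_mult. rewrite (Rabs_right (y+x)) by lra.
        assert (Rabs (y-x) <= r) by (apply Rabs_le; lra).
        apply Rmult_le_compat; try lra; apply Rabs_pos. }
      assert (Abs2 : -(r*(2*x+1)) <= (y-x)*(y+x) <= r*(2*x+1)).
      { pose proof (Rle_abs ((y-x)*(y+x))). pose proof (Rle_abs (-((y-x)*(y+x)))).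
        rewrite Rabs_Ropp in H5. lra. }
      assert (K*((y-x)*(y+x)) <= K*(r*(2*x+1))) by (apply Rmult_le_compat_l; lra).
      assert (K*(-(r*(2*x+1))) <= K*((y-x)*(y+x))) by (apply Rmult_le_compat_l; lra).
      assert (K*(r*(2*x+1)) = r*L) by (unfold L; ring).
      nra.
  - intros H. destruct (H (1 + 1/(2*beta))) as [_ H'].
    assert (0 < 1/(2*beta)) by (apply Rdiv_lt_0_compat; lra).
    destruct (H' ltac:(lra)) as [_ [C _]].
    unfold Defs.C1 in C. rewrite EvE in C. unfold K in C.
    set (t := 1/(2*beta)) in *.
    assert (Ht : 2*beta*t = 1) by (unfold t; field; lra).
    assert (id : m*s*(2*beta)*((1+t)*(1+t)) - m*s*(2*beta+2+t) = m*s*(2*beta*t-1)*(2+t)) by ring.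
    rewrite Ht in id.
    assert (0 < m*s*(2*beta+t)) by (apply Rmult_lt_0_compat; lra).
    lra.
Qed.

Lemma pok g : 0 < g -> params_ok (1/2) g 0 (1/4) (1/4) 1 1.
Proof. intros. unfold params_ok. lra. Qed.

Lemma conds_ex E : conds (1/2) (1/2) 0 (1/4) (1/4) E <-> 0 < E < 2.
Proof.
  unfold conds, Defs.C1, C2, C3, C4. simpl pow.
  split.
  - intros [A [B _]]. lra.
  - intros [A B]. split; [lra|]. split; [lra|]. split; [|lra].
    assert (0 <= E*E) by nra. nra.
Qed.

Lemma conds_empty E : ~ conds (1/2) 1 0 (1/4) (1/4) E.
Proof.
  unfold conds, Defs.C1, C2, C3, C4. simpl pow. intros (_ & _ & H & _). lra.
Qed.

Lemma ex1 : exists c gamma omega h d sigma mu b : R,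
     params_ok c gamma omega h d sigma mu /\ 0 < b /\
     is_empty (Bset c gamma omega h d sigma mu b).
Proof.
  exists (1/2), 1, 0, (1/4), (1/4), 1, 1, 1. split; [apply pok; lra|]. split; [lra|].
  intros x [_ H]. exact (conds_empty _ H).
Qed.

Lemma ex2 : exists c gamma omega h d sigma mu b bb : R,
     params_ok c gamma omega h d sigma mu /\ 0 < b /\ 0 < bb /\
     is_open_interval (Bset c gamma omega h d sigma mu b) 0 bb.
Proof.
  exists (1/2), (1/2), 0, (1/4), (1/4), 1, 1, 1, (1/2). split; [apply pok; lra|].
  split; [lra|]. split; [lra|].
  intros x. unfold Bset. rewrite conds_ex. unfold Eval. simpl pow. lra.
Qed.

Lemma ex3 : exists c gamma omega h d sigma mu b ba bb : R,
     params_ok c gamma omega h d sigma mu /\ 0 < b /\ 0 < ba /\ ba < bb /\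
     is_open_interval (Bset c gamma omega h d sigma mu b) ba bb.
Proof.
  exists (1/2), (1/2), 0, (1/4), (1/4), 1, 4, 1, (1/4), (1/2).
  split; [unfold params_ok; lra|].
  split; [lra|]. split; [lra|]. split; [lra|].
  intros x. unfold Bset. rewrite conds_ex. unfold Eval. simpl pow. lra.
Qed.

Lemma ex4 : exists c gamma omega h d sigma mu beta : R,
     params_ok c gamma omega h d sigma mu /\ 0 < beta /\
     is_empty (bset c gamma omega h d sigma mu beta).
Proof.
  exists (1/2), 1, 0, (1/4), (1/4), 1, 1, 1. split; [apply pok; lra|]. split; [lra|].
  intros x [_ H]. exact (conds_empty _ H).
Qed.

Lemma ex5 : exists c gamma omega h d sigma mu beta bb : R,
     params_ok c gamma omega h d sigma mu /\ 0 < beta /\ 0 < bb /\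
     is_open_interval (bset c gamma omega h d sigma mu beta) 0 bb.
Proof.
  exists (1/2), (1/2), 0, (1/4), (1/4), 1, 1, (1/2), 1. split; [apply pok; lra|].
  split; [lra|]. split; [lra|].
  intros x. unfold bset. rewrite conds_ex. unfold Eval. simpl pow.
  split.
  - intros [H1 [H2 H3]]. split; [lra|]. nra.
  - intros [H1 H2]. split; [lra|]. split; nra.
Qed.

Lemma ex6 : exists c gamma omega h d sigma mu beta ba bb : R,
     params_ok c gamma omega h d sigma mu /\ 0 < beta /\ 0 < ba /\ ba < bb /\
     is_open_interval (bset c gamma omega h d sigma mu beta) ba bb.
Proof.
  exists (1/2), (1/2), 0, (1/4), (1/4), 1, (8/3), (1/2), (1/2), 1.
  split; [unfold params_ok; lra|].
  split; [lra|]. split; [lra|]. split; [lra|].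
  intros x. unfold bset. rewrite conds_ex. unfold Eval. simpl pow.
  split.
  - intros [H1 [H2 H3]]. split; nra.
  - intros [H1 H2]. split; [lra|]. split; nra.
Qed.
Theorem proposition5 :
  (* (i) structure of the beta-set, b fixed *)
  (forall c gamma omega h d sigma mu b : R,
     params_ok c gamma omega h d sigma mu -> 0 < b ->
     (is_empty (Bset c gamma omega h d sigma mu b) \/
      exists ba bb : R, 0 <= ba /\ ba < bb /\ bb <= 1 / (2 * b ^ 2) /\
        is_open_interval (Bset c gamma omega h d sigma mu b) ba bb) /\
     ~ (forall beta, Bset c gamma omega h d sigma mu b beta <-> 0 < beta)) /\
  (* (ii) the three possibilities occur (beta-set) *)
  (exists c gamma omega h d sigma mu b : R,
     params_ok c gamma omega h d sigma mu /\ 0 < b /\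
     is_empty (Bset c gamma omega h d sigma mu b)) /\
  (exists c gamma omega h d sigma mu b bb : R,
     params_ok c gamma omega h d sigma mu /\ 0 < b /\ 0 < bb /\
     is_open_interval (Bset c gamma omega h d sigma mu b) 0 bb) /\
  (exists c gamma omega h d sigma mu b ba bb : R,
     params_ok c gamma omega h d sigma mu /\ 0 < b /\ 0 < ba /\ ba < bb /\
     is_open_interval (Bset c gamma omega h d sigma mu b) ba bb) /\
  (* (iii) structure of the b-set, beta fixed *)
  (forall c gamma omega h d sigma mu beta : R,
     params_ok c gamma omega h d sigma mu -> 0 < beta ->
     (is_empty (bset c gamma omega h d sigma mu beta) \/
      exists ba bb : R, 0 <= ba /\ ba < bb /\ bb <= 1 / sqrt (2 * beta) /\
        is_open_interval (bset c gamma omega h d sigma mu beta) ba bb) /\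
     ~ (forall b, bset c gamma omega h d sigma mu beta b <-> 0 < b)) /\
  (* (iv) the three possibilities occur (b-set) *)
  (exists c gamma omega h d sigma mu beta : R,
     params_ok c gamma omega h d sigma mu /\ 0 < beta /\
     is_empty (bset c gamma omega h d sigma mu beta)) /\
  (exists c gamma omega h d sigma mu beta bb : R,
     params_ok c gamma omega h d sigma mu /\ 0 < beta /\ 0 < bb /\
     is_open_interval (bset c gamma omega h d sigma mu beta) 0 bb) /\
  (exists c gamma omega h d sigma mu beta ba bb : R,
     params_ok c gamma omega h d sigma mu /\ 0 < beta /\ 0 < ba /\ ba < bb /\
     is_open_interval (bset c gamma omega h d sigma mu beta) ba bb).
Proof.
  split; [intros; apply part_beta; auto|].
  split; [exact ex1|]. split; [exact ex2|]. split; [exact ex3|].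
  split; [intros; apply part_b; auto|].
  split; [exact ex4|]. split; [exact ex5|]. exact ex6.
Qed.
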